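(* For any Euclidean function $\sigma$ on an integral domain $A$, the following conditions are equivalent: (a) $\sigma$ is non-archimedean and satisfies $\sigma(ab) = \sigma(a)+\sigma(b)$ for all $a,b \in A$. (b) The function $2^\sigma: A \to \mathbb{N}$, $a\mapsto 2^{\sigma(a)}$, is a non-archimedean norm on the domain $A$. (c) The function $2^\sigma$ is a norm on $A$, and the prime subring of $A$ is contained in $\{a \in A: \sigma(a) \leq \sigma(1)\} = A^\times \cup \{0\}$. (d) The function $2^\sigma$ is a norm on $A$, and $A$ contains a field. (e) The factroids of $A$ are the sets $C_n := \{a \in A: \sigma(a) \leq n\}$ for all $n \in \sigma(A) \cup \{\infty\}$ (which are distinct for all $n \in \sigma(A)$), and the level sets $D_n := \{a \in A: \sigma(a) = n\}$ satisfy $D_m D_n \subseteq D_{m+n}$ for all $m,n \in \sigma(A)$. Moreover, a domain $A$ admits a Euclidean function satisfying the equivalent conditions above if and only if $A$ is a field or $A \cong k[x]$ for some field $k$.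
   Context: A Euclidean function on an integral domain $A$ is a function $\sigma:A\to\mathbb{N}\cup\{-\infty\}$ such that $\sigma(a)=-\infty$ iff $a=0$; for all $a,b\in A$ with $b\neq 0$ there exist $q,r\in A$ with $a=bq+r$ and $\sigma(r)<\sigma(b)$; and $\sigma(a)\le\sigma(ab)$ for all $a,b$ with $b\ne0$. It is non-archimedean if $\sigma(a+b)\le\max\{\sigma(a),\sigma(b)\}$. Here $2^{-\infty}=0$. A norm on $A$ is a function $N:A\to\mathbb{R}_{\ge0}$ with $N(a)=0$ iff $a=0$, $N(ab)=N(a)N(b)$ and $N(a+b)\le N(a)+N(b)$; it is non-archimedean if $N(a+b)\le\max\{N(a),N(b)\}$. A factroid of $A$ is an additive subgroup $F$ of $A$ such that $ba\in F$ with $b\ne 0$ implies $a\in F$. $D_mD_n=\{xy\mid x\in D_m, y\in D_n\}$. *)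

(* Defs.v *)
From HB Require Import structures.
From mathcomp Require Import all_boot all_order all_algebra.
Set Implicit Arguments. Unset Strict Implicit. Unset Printing Implicit Defensive.
Import Order.TTheory GRing.Theory Num.Theory.
Local Open Scope ring_scope.

(* Values of a Euclidean function: N ∪ {-oo}, encoded as option nat,
   with None = -oo. *)
Definition ole (x y : option nat) : bool :=
  match x, y with
  | None, _ => true
  | Some _, None => false
  | Some m, Some n => (m <= n)%N
  end.
Definition olt (x y : option nat) : bool := ~~ ole y x.
Definition omax (x y : option nat) : option nat := if ole x y then y else x.
Definition oadd (x y : option nat) : option nat :=
  match x, y with
  | Some m, Some n => Some (m + n)%N
  | _, _ => None
  end.
Definition pow2 (R : numDomainType) (x : option nat) : R :=
  match x with None => 0 | Some n => 2 ^+ n end.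

Section Defs.
Variable A : idomainType.

Definition euclidean (sigma : A -> option nat) : Prop :=
  (forall a, sigma a = None <-> a = 0) /\
  (forall a b, b != 0 -> exists q r, a = b * q + r /\ olt (sigma r) (sigma b)) /\
  (forall a b, b != 0 -> ole (sigma a) (sigma (a * b))).

Definition nonarch_euclid (sigma : A -> option nat) : Prop :=
  forall a b, ole (sigma (a + b)) (omax (sigma a) (sigma b)).

Definition is_norm (R : numDomainType) (N : A -> R) : Prop :=
  (forall a, 0 <= N a) /\
  (forall a, N a = 0 <-> a = 0) /\
  (forall a b, N (a * b) = N a * N b) /\
  (forall a b, N (a + b) <= N a + N b).

Definition nonarch_norm (R : numDomainType) (N : A -> R) : Prop :=
  is_norm N /\ forall a b, N (a + b) <= Num.max (N a) (N b).

Definition factroid (F : pred A) : Prop :=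
  0 \in F /\ (forall x y, x \in F -> y \in F -> x - y \in F) /\
  (forall a b, b != 0 -> b * a \in F -> a \in F).

Definition contains_field : Prop :=
  exists K : pred A,
    1 \in K /\ (forall x y, x \in K -> y \in K -> x - y \in K) /\
    (forall x y, x \in K -> y \in K -> x * y \in K) /\
    (forall x, x \in K -> x != 0 -> exists2 y, y \in K & x * y = 1).

Definition is_field : Prop := forall x : A, x != 0 -> x \is a GRing.unit.

End Defs.

(* Main.v *)
Require Import Defs.
From HB Require Import structures.
From mathcomp Require Import all_boot all_order all_algebra.
From mathcomp Require Import zify ring lra.
Set Implicit Arguments. Unset Strict Implicit. Unset Printing Implicit Defensive.
Import Order.TTheory GRing.Theory Num.Theory.
Local Open Scope ring_scope.

Lemma ole_refl x : ole x x.
Proof. by case: x => //= n; rewrite leqnn. Qed.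
Lemma ole_anti x y : ole x y -> ole y x -> x = y.
Proof. by case: x; case: y => //= m n h1 h2; congr Some; apply/eqP; rewrite eqn_leq h1 h2. Qed.
Lemma ole_trans x y z : ole x y -> ole y z -> ole x z.
Proof. by case: x; case: y; case: z => //= a b c; lia. Qed.
Lemma ole_total x y : ole x y || ole y x.
Proof. by case: x; case: y => //= a b; apply: leq_total. Qed.
Lemma oltW x y : olt x y -> ole x y.
Proof. rewrite /olt; by case: x; case: y => //= a b; rewrite -ltnNge => /ltnW. Qed.
Lemma ole_maxl x y : ole x (omax x y).
Proof. rewrite /omax; case: ifP => // h; by rewrite ole_refl. Qed.
Lemma ole_maxr x y : ole y (omax x y).
Proof. rewrite /omax; case: ifP => h; first by rewrite ole_refl.
by have := ole_total x y; rewrite h. Qed.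
Lemma omax_cases x y : omax x y = x \/ omax x y = y.
Proof. rewrite /omax; case: ifP; auto. Qed.
Lemma ole_None x : ole x None -> x = None.
Proof. by case: x. Qed.
Lemma olt_None x : ~~ olt x None.
Proof. by rewrite /olt; case: x. Qed.
Lemma oltNge x y : olt x y -> ~~ ole y x.
Proof. by []. Qed.

Section Euc.
Variables (A : idomainType) (s : A -> option nat).
Hypothesis He : euclidean s.

Lemma s_eq0 a : s a = None <-> a = 0.
Proof. by case: He => h _; apply: h. Qed.
Lemma s0 : s 0 = None.
Proof. by apply/s_eq0. Qed.
Lemma sSome a : a != 0 -> exists n, s a = Some n.
Proof.
move=> h; case E: (s a) => [n|]; first by eauto.
by move/s_eq0: E => E; rewrite E eqxx in h.
Qed.
Lemma s_mulr a b : b != 0 -> ole (s a) (s (a * b)).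
Proof. by case: He => _ [_ h]; apply: h. Qed.
Lemma s_div a b : b != 0 -> exists q r, a = b * q + r /\ olt (s r) (s b).
Proof. by case: He => _ [h _]; apply: h. Qed.
Lemma sN a : s (- a) = s a.
Proof.
have n1 : (-1 : A) != 0 by rewrite oppr_eq0 oner_eq0.
apply: ole_anti.
  by have := s_mulr (- a) n1; rewrite mulrN1 opprK.
by have := s_mulr a n1; rewrite mulrN1.
Qed.

Section Mult.
Hypothesis Hna : nonarch_euclid s.
Hypothesis Hm : forall a b, s (a * b) = oadd (s a) (s b).

Lemma s1 : s 1 = Some 0.
Proof.
have [n hn] := sSome (oner_neq0 A).
have := Hm 1 1; rewrite mulr1 hn /= => [[]] h.
by congr Some; lia.
Qed.
Lemma sB a b : ole (s (a - b)) (omax (s a) (s b)).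
Proof. by rewrite -(sN b); apply: Hna. Qed.
Lemma s_strict a b : olt (s b) (s a) -> s (a + b) = s a.
Proof.
move=> h; apply: ole_anti.
  have := Hna a b; case: (omax_cases (s a) (s b)) => -> //.
  by move=> h2; apply: ole_trans h2 (oltW h).
have := sB (a + b) b; rewrite addrK.
case: (omax_cases (s (a + b)) (s b)) => -> // h2.
by move: h; rewrite /olt h2.
Qed.
Lemma s_unit0 a : s a = Some 0 -> exists2 b, s b = Some 0 & a * b = 1.
Proof.
move=> ha.
have a0 : a != 0 by apply/negP => /eqP h; move/s_eq0: h; rewrite ha.
have [q [r [e hr]]] := s_div 1 a0.
have r0 : r = 0.
  by apply/s_eq0; move: hr; rewrite ha /olt; case: (s r).
move: e; rewrite r0 addr0 => e; exists q => //.
have := Hm a q; rewrite -e s1 ha.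
by case: (s q) => //= n [->].
Qed.
Lemma s_unit a : a \is a GRing.unit -> s a = Some 0.
Proof.
move=> ua; have := Hm a a^-1; rewrite mulrV // s1.
by case: (s a) => // n; case: (s a^-1) => //= m [] h; congr Some; lia.
Qed.
Lemma s_le0 a : ole (s a) (Some 0) -> a = 0 \/ a \is a GRing.unit.
Proof.
case E: (s a) => [n|] /=; last by move/s_eq0: E; auto.
rewrite leqn0 => /eqP h; subst n; right.
have [b _ hb] := s_unit0 E; apply/unitrP; exists b; split => //; by rewrite mulrC.
Qed.
End Mult.
End Euc.

Section Pow.
Variable R : realFieldType.
Lemma two_gt1 : (1 : R) < 2. Proof. by rewrite ltrDl. Qed.
Lemma pow2_ge0 x : 0 <= pow2 R x.
Proof. by case: x => //= n; rewrite exprn_ge0. Qed.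
Lemma pow2_eq0 x : pow2 R x = 0 <-> x = None.
Proof. by case: x => //= n; split => // /eqP; rewrite expf_eq0 pnatr_eq0 andbF. Qed.
Lemma pow2_add x y : pow2 R (oadd x y) = pow2 R x * pow2 R y.
Proof. by case: x; case: y => //= *; rewrite ?mulr0 ?mul0r // exprD mulrC. Qed.
Lemma pow2_le x y : (pow2 R x <= pow2 R y) = ole x y.
Proof.
case: x => [m|]; case: y => [n|] /=.
- by rewrite (ler_eXn2l two_gt1).
- by apply/negbTE; rewrite -ltNge; by rewrite exprn_gt0.
- by rewrite exprn_ge0.
- by rewrite lexx.
Qed.
Lemma pow2_inj x y : pow2 R x = pow2 R y -> x = y.
Proof. by move=> h; apply: ole_anti; rewrite -pow2_le h lexx. Qed.
Lemma pow2_max x y : pow2 R (omax x y) = Num.max (pow2 R x) (pow2 R y).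
Proof.
rewrite /omax -pow2_le; case: ifP => h.
  by apply/esym/max_idPr.
by apply/esym/max_idPl; apply/ltW; rewrite ltNge h.
Qed.
End Pow.

Lemma max_le_add (R : realFieldType) (x y : R) : 0 <= x -> 0 <= y -> Num.max x y <= x + y.
Proof. move=> hx hy; rewrite ge_max; apply/andP; split; lra. Qed.

Section Impl.
Variables (R : realFieldType) (A : idomainType) (s : A -> option nat).
Hypothesis He : euclidean s.
Let N := fun a => pow2 R (s a).
Definition Pa := nonarch_euclid s /\ (forall a b, s (a * b) = oadd (s a) (s b)).

Lemma a_b : Pa -> nonarch_norm N.
Proof.
case=> Hna Hm.
have H1 : forall a b, N (a + b) <= Num.max (N a) (N b).
  by move=> a b; rewrite /N -pow2_max pow2_le; apply: Hna.
split => //; split; first by move=> a; apply: pow2_ge0.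
split; first by move=> a; rewrite /N pow2_eq0; apply: s_eq0.
split; first by move=> a b; rewrite /N Hm pow2_add.
move=> a b; apply: le_trans (H1 a b) _.
by apply: max_le_add; apply: pow2_ge0.
Qed.

Lemma norm_mult : is_norm N -> forall a b, s (a * b) = oadd (s a) (s b).
Proof. by case=> _ [_ [h _]] a b; apply: (@pow2_inj R); rewrite pow2_add; apply: h. Qed.

Lemma b_a : nonarch_norm N -> Pa.
Proof.
case=> hn h; split; last exact: norm_mult.
by move=> a b; rewrite -(pow2_le R) pow2_max; apply: h.
Qed.

Lemma nat_le0 : Pa -> forall n, ole (s n%:R) (Some 0).
Proof.
case=> Hna Hm; elim=> [|n IH]; first by rewrite s0.
rewrite mulrS; apply: ole_trans (Hna _ _) _.
case: (omax_cases (s 1) (s n%:R)) => -> //; by rewrite (s1 He Hm).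
Qed.

Lemma a_c : Pa -> forall z : int, ole (s z%:~R) (s 1).
Proof.
move=> hp; have [_ Hm] := hp; rewrite (s1 He Hm); case=> n.
  exact: nat_le0.
by rewrite NegzE mulrNz sN //; apply: nat_le0.
Qed.

Lemma c_a : is_norm N -> (forall z : int, ole (s z%:~R) (s 1)) -> Pa.
Proof.
move=> hn hz; have Hm := norm_mult hn; split => //.
have [hge [heq [hmul htri]]] := hn.
move=> a b; apply/negPn/negP => h.
case E: (s (a + b)) => [k|]; last by rewrite E in h.
case Eo: (omax (s a) (s b)) => [m|]; last first.
  have /ole_None ha : ole (s a) None by rewrite -Eo ole_maxl.
  have /ole_None hb : ole (s b) None by rewrite -Eo ole_maxr.
  move/(s_eq0 He): ha => ha; move/(s_eq0 He): hb => hb.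
  by move: E; rewrite ha hb addr0 (s0 He).
move: h; rewrite E Eo /= -ltnNge => hkm.
set M := pow2 R (Some m).
have hM : 0 < M by rewrite /M /= exprn_gt0 // ltr0n.
have hu : N a <= M by rewrite /N /M pow2_le -Eo ole_maxl.
have hv : N b <= M by rewrite /N /M pow2_le -Eo ole_maxr.
have hw : 2 * M <= N (a + b).
  rewrite /N E /M /= -exprS (ler_eXn2l (two_gt1 R)) //.
have h2 : N 2 <= 1.
  have := hz 2; rewrite (s1 He Hm) -(pow2_le R) => h; exact: h.
have hsq : N (a + b) * N (a + b) <= N a * N a + N 2 * (N a * N b) + N b * N b.
  rewrite -!hmul.
  have -> : (a + b) * (a + b) = a * a + 2 * (a * b) + b * b by ring.
  apply: le_trans (htri _ _) _; rewrite lerD2r; exact: htri.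
have hua := hge a; have hvb := hge b; have ht := hge 2.
have e1 : N a * N a <= M * M := ler_pM hua hua hu hu.
have e2 : N b * N b <= M * M := ler_pM hvb hvb hv hv.
have e3 : N 2 * (N a * N b) <= 1 * (M * M) := ler_pM ht (mulr_ge0 hua hvb) h2 (ler_pM hua hvb hu hv).
have hM2 : 0 <= 2 * M by apply: mulr_ge0 => //; apply: ltW.
have e4 : (2 * M) * (2 * M) <= N (a + b) * N (a + b) := ler_pM hM2 hM2 hw hw.
have e5 : 0 < M * M by apply: mulr_gt0.
have e6 : 4 * (M * M) <= N (a + b) * N (a + b).
  by rewrite (_ : 4 * (M * M) = 2 * M * (2 * M)) //; ring.
move: hsq e1 e2 e3 e6 e5.
move: (N a * N a) (N b * N b) (N 2 * (N a * N b)) (N (a + b) * N (a + b)) (M * M) => x1 x2 x3 x4 x5.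
clear; move=> *; lra.
Qed.

Definition Kf := [pred x : A | ole (s x) (Some 0)].

Lemma a_d : Pa -> contains_field A.
Proof.
case=> Hna Hm; exists Kf; split; first by rewrite inE (s1 He Hm) /=.
split.
  move=> x y; rewrite !inE => hx hy; apply: ole_trans (sB He Hna _ _) _.
  by case: (omax_cases (s x) (s y)) => ->.
split.
  move=> x y; rewrite !inE Hm; case: (s x) => // n; case: (s y) => //= m; lia.
move=> x; rewrite inE => hx x0.
have [n hn] := sSome He x0.
have n0 : n = 0%N by move: hx; rewrite hn /=; lia.
subst n; have [y hy hxy] := s_unit0 He Hm hn.
by exists y => //; rewrite inE hy.
Qed.

Lemma d_c : is_norm N -> contains_field A -> forall z : int, ole (s z%:~R) (s 1).
Proof.
move=> hn [K [K1 [KB [KM KV]]]] z; have Hm := norm_mult hn.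
have K0 : 0 \in K by rewrite -(subrr 1); apply: KB.
have KN x : x \in K -> - x \in K by move=> hx; rewrite -sub0r; apply: KB.
have Kn n : (n%:R : A) \in K.
  elim: n => // n IH; rewrite mulrS.
  have -> : (1 + n%:R : A) = 1 - (- n%:R) by rewrite opprK.
  by apply: KB => //; apply: KN.
have Kz : (z%:~R : A) \in K.
  case: z => n; first exact: Kn.
  by rewrite NegzE mulrNz; apply: KN; apply: Kn.
rewrite (s1 He Hm); have [->|z0] := eqVneq (z%:~R : A) 0; first by rewrite s0.
have [y _ hy] := KV _ Kz z0.
have u : (z%:~R : A) \is a GRing.unit by apply/unitrP; exists y; rewrite mulrC hy.
by rewrite (s_unit He Hm u).
Qed.
End Impl.

From Stdlib Require Import Classical.

Lemma min_ex (P : nat -> Prop) : (exists n, P n) -> exists n, P n /\ forall m, P m -> (n <= m)%N.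
Proof.
case=> n; elim/ltn_ind: n => n IH Pn.
case: (classic (exists m, (m < n)%N /\ P m)) => [[m [hm Pm]]|h].
  exact: IH hm Pm.
exists n; split => // m Pm; rewrite leqNgt; apply/negP => hm; apply: h; by exists m.
Qed.

Lemma dvd_gap d m n : (0 < d)%N -> (d %| m)%N -> (d %| n)%N -> (m < n)%N -> (m <= n - d)%N.
Proof.
move=> d0 /dvdnP [i ->] /dvdnP [j ->] h.
have : (i < j)%N by rewrite ltn_pmul2r in h.
move=> hij; nia.
Qed.

Section Fact.
Variables (A : idomainType) (s : A -> option nat).
Hypothesis He : euclidean s.
Hypothesis Hna : nonarch_euclid s.
Hypothesis Hm : forall a b, s (a * b) = oadd (s a) (s b).

Implicit Types F : pred A.

Lemma f_sub F x y : factroid F -> x \in F -> y \in F -> x - y \in F.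
Proof. by case=> _ [h _]; apply: h. Qed.
Lemma f_0 F : factroid F -> 0 \in F.
Proof. by case. Qed.
Lemma f_div F b a : factroid F -> b != 0 -> b * a \in F -> a \in F.
Proof. by case=> _ [_ h]; apply: h. Qed.
Lemma f_add F x y : factroid F -> x \in F -> y \in F -> x + y \in F.
Proof.
move=> hF hx hy; have -> : x + y = x - (0 - y) by rewrite sub0r opprK.
by apply: (f_sub hF) => //; apply: (f_sub hF) => //; apply: f_0.
Qed.
Lemma f_small F x a : factroid F -> x \in F -> x != 0 -> ole (s a) (Some 0) -> a \in F.
Proof.
move=> hF hx x0 ha; case: (s_le0 He Hm ha) => [->|ua]; first exact: f_0.
have a0 : a != 0 by apply/negP => /eqP h; rewrite h unitr0 in ua.
apply: (f_div (b := x * a^-1) hF); first by rewrite mulf_eq0 negb_or x0 invr_eq0.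
by rewrite mulrVK.
Qed.

Lemma fact_C c : factroid [pred x | ole (s x) (s c)].
Proof.
split; first by rewrite inE (s0 He).
split.
  move=> x y; rewrite !inE => hx hy; apply: ole_trans (sB He Hna _ _) _.
  by case: (omax_cases (s x) (s y)) => ->.
move=> a b b0; rewrite !inE Hm => h; apply: ole_trans h.
have [n ->] := sSome He b0; case: (s a) => //= m; lia.
Qed.

Lemma small_none a : (forall t d, s t = Some d -> (0 < d)%N -> False) -> ole (s a) (Some 0).
Proof. move=> h; case E: (s a) => [m|] //=; case: m E => // m E; by case: (h _ _ E). Qed.

Section Pos.
Variables (t : A) (d : nat).
Hypothesis Ht : s t = Some d.
Hypothesis Hd : (0 < d)%N.
Hypothesis Hmin : forall a m, s a = Some m -> (0 < m)%N -> (d <= m)%N.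

Lemma t0 : t != 0.
Proof. by apply/negP => /eqP h; move: Ht; rewrite h (s0 He). Qed.

Lemma tdiv a : exists q r, a = t * q + r /\ ole (s r) (Some 0).
Proof.
have [q [r [e hr]]] := s_div He a t0; exists q, r; split => //.
move: hr; rewrite Ht /olt; case E: (s r) => [m|] //=.
case: m E => // m E; move/Hmin: E => h; rewrite -ltnNge; lia.
Qed.

Lemma tdiv_val a m q r : s a = Some m -> (0 < m)%N -> a = t * q + r -> ole (s r) (Some 0) ->
  s q = Some (m - d)%N /\ (d <= m)%N.
Proof.
move=> ha m0 e hr.
have htq : t * q = a + - r by rewrite e addrK.
have : s (a + - r) = s a.
  apply: (s_strict He Hna); rewrite (sN He) ha /olt; case: (s r) hr => //= k; lia.
rewrite -htq Hm Ht ha; case: (s q) => //= k [] <-; split; [congr Some; lia | lia].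
Qed.

Lemma mult_d m a : s a = Some m -> (d %| m)%N.
Proof.
elim/ltn_ind: m a => m IH a ha.
case: m IH ha => [|m] IH ha; first by rewrite dvdn0.
have [q [r [e hr]]] := tdiv a.
have [hq hdm] := tdiv_val ha (ltn0Sn _) e hr.
have h := IH (m.+1 - d)%N ltac:(lia) q hq.
by rewrite -(subnK hdm); apply: dvdn_add.
Qed.

Lemma KL F : factroid F -> forall n x, x \in F -> s x = Some n ->
  forall a, ole (s a) (Some n) -> a \in F.
Proof.
move=> hF; elim/ltn_ind => n IH x xF hx a ha.
have x0 : x != 0 by apply/negP => /eqP h; move: hx; rewrite h (s0 He).
case Ea: (s a) => [m|]; last by move/(s_eq0 He): Ea => ->; apply: f_0.
case: m Ea => [|m] Ea; first by apply: (f_small hF xF x0); rewrite Ea.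
set m1 := m.+1 in Ea.
have hmn : (m1 <= n)%N by move: ha; rewrite Ea.
have n0 : (0 < n)%N by apply: leq_trans hmn.
have [q [r [e hr]]] := tdiv x.
have [hq dn] := tdiv_val hx n0 e hr.
have rF : r \in F by apply: (f_small hF xF x0).
have tqF : t * q \in F by rewrite (_ : t * q = x - r); [apply: f_sub | rewrite e addrK].
have qF : q \in F by apply: (f_div hF t0 tqF).
have IHq := IH (n - d)%N ltac:(lia) q qF hq.
case: (leqP m1 (n - d)) => hm; first by apply: IHq; rewrite Ea.
have emn : m1 = n.
  apply/eqP; rewrite eqn_leq hmn /=; rewrite leqNgt; apply/negP => h.
  have := dvd_gap Hd (mult_d Ea) (mult_d hx) h; lia.
have [u [r' [e' hr']]] := s_div He a x0.
have hr'n : olt (s r') (Some n) by rewrite -hx.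
have xuF : x * u \in F.
  have hxu : ole (s (x * u)) (Some n).
    rewrite (_ : x * u = a - r'); last by rewrite e' addrK.
    apply: ole_trans (sB He Hna _ _) _.
    case: (omax_cases (s a) (s r')) => ->; first by rewrite Ea emn /= leqnn.
    exact: oltW.
  have [->|u0] := eqVneq u 0; first by rewrite mulr0; apply: f_0.
  have hu : ole (s u) (Some 0).
    move: hxu; rewrite Hm hx; case: (s u) => //= k; lia.
  case: (s_le0 He Hm hu) => [u00|uu]; first by rewrite u00 eqxx in u0.
  apply: (f_div (b := u^-1) hF); first by rewrite invr_eq0.
  by rewrite mulrC mulrK.
have r'F : r' \in F.
  case E: (s r') => [k|]; last by move/(s_eq0 He): E => ->; apply: f_0.
  apply: IHq; rewrite E /=; apply: dvd_gap => //.
    exact: (mult_d E).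
    exact: (mult_d hx).
  by move: hr'n; rewrite E /olt /= -ltnNge.
by rewrite e'; apply: f_add.
Qed.
End Pos.

Lemma KL_all F x a : factroid F -> x \in F -> ole (s a) (s x) -> a \in F.
Proof.
move=> hF xF ha.
case: (classic (exists t d, s t = Some d /\ (0 < d)%N)) => [hex|hno].
  have [d [[t [Ht Hd]] Hmin]] := min_ex (P := fun d => exists t, s t = Some d /\ (0 < d)%N)
     ltac:(by case: hex => t [d hd]; exists d, t).
  case Ex: (s x) => [n|]; last by move: ha; rewrite Ex => /ole_None /(s_eq0 He) ->; apply: f_0.
  apply: (KL Ht Hd _ hF xF Ex); last by rewrite -Ex.
  by move=> b m hb hm; apply: Hmin; exists b.
have h : forall t d, s t = Some d -> (0 < d)%N -> False by move=> t d h1 h2; apply: hno; exists t, d.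
case Ex: (s x) => [n|]; last by move: ha; rewrite Ex => /ole_None /(s_eq0 He) ->; apply: f_0.
have x0 : x != 0 by apply/negP => /eqP h0; move: Ex; rewrite h0 (s0 He).
exact: (f_small hF xF x0 (small_none a h)).
Qed.

Lemma bounded_max F : factroid F -> forall N, (forall x, x \in F -> ole (s x) (Some N)) ->
  exists c, c \in F /\ forall y, y \in F -> ole (s y) (s c).
Proof.
move=> hF; elim=> [|N IH] hb.
  case: (classic (exists x, x \in F /\ s x = Some 0)) => [[x [xF hx]]|hno].
    by exists x; split => // y /hb; rewrite hx.
  exists 0; split; first exact: f_0.
  move=> y yF; rewrite (s0 He); have := hb y yF.
  case E: (s y) => [k|] //=; case: k E => // E _; case: hno; by exists y.
case: (classic (exists x, x \in F /\ s x = Some N.+1)) => [[x [xF hx]]|hno].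
  by exists x; split => // y /hb; rewrite hx.
apply: IH => y yF; have := hb y yF.
case E: (s y) => [k|] //= hk.
have : k != N.+1 by apply/negP => /eqP hk'; apply: hno; exists y; rewrite E hk'.
lia.
Qed.

Lemma fact_class F : factroid F -> F =i predT \/ exists c, F =i [pred x | ole (s x) (s c)].
Proof.
move=> hF.
case: (classic (exists c, c \in F /\ forall y, y \in F -> ole (s y) (s c))) => [[c [cF hc]]|hno].
  right; exists c => y; rewrite inE; apply/idP/idP; first exact: hc.
  by move=> h; apply: (KL_all hF cF h).
left => a; rewrite inE /=.
case: (classic (exists x, x \in F /\ ole (s a) (s x))) => [[x [xF hx]]|hno2].
  exact: (KL_all hF xF hx).
case Ea: (s a) => [N|]; last by move/(s_eq0 He): Ea => ->; apply: f_0.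
exfalso; apply: hno; apply: (bounded_max hF (N := N)) => x xF.
have := ole_total (s a) (s x); case/orP => h; last by rewrite -Ea.
by case: hno2; exists x.
Qed.
End Fact.

Section AE.
Variables (A : idomainType) (s : A -> option nat).
Hypothesis He : euclidean s.
Implicit Types F : pred A.

Lemma factroid_eq F G : F =i G -> factroid G -> factroid F.
Proof.
move=> e [h0 [hs hd]]; split; first by rewrite e.
split; first by move=> x y; rewrite !e; apply: hs.
by move=> a b b0; rewrite !e; apply: hd.
Qed.

Lemma factroidT : factroid (predT : pred A).
Proof. by split => //; split. Qed.

Definition Pe := (forall F : pred A, factroid F <->
         (F =i predT \/ exists c : A, F =i [pred x | ole (s x) (s c)])) /\
      (forall m n, (exists a, s a = m) -> (exists b, s b = n) ->
         forall x y, s x = m -> s y = n -> s (x * y) = oadd m n).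

Lemma a_e : Pa s -> Pe.
Proof.
case=> Hna Hm; split.
  move=> F; split; first exact: (fact_class He Hna Hm).
  case=> [e|[c e]]; first exact: (factroid_eq e factroidT).
  exact: (factroid_eq e (fact_C He Hna Hm c)).
by move=> m n _ _ x y <- <-; apply: Hm.
Qed.

Lemma e_a : Pe -> Pa s.
Proof.
case=> h1 h2.
have Hm : forall a b, s (a * b) = oadd (s a) (s b).
  by move=> a b; apply: h2 => //; [exists a | exists b].
split => // a b.
pose c := if ole (s a) (s b) then b else a.
have hc : s c = omax (s a) (s b) by rewrite /c /omax; case: ifP.
have hF : factroid [pred x | ole (s x) (s c)] by apply/h1; right; exists c.
have aC : a \in [pred x | ole (s x) (s c)] by rewrite inE hc ole_maxl.
have bC : b \in [pred x | ole (s x) (s c)] by rewrite inE hc ole_maxr.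
have := f_add hF aC bC; by rewrite inE hc.
Qed.
End AE.

Lemma tfae_part (R : realFieldType) (A : idomainType) (sigma : A -> option nat) :
  euclidean sigma ->
    [<->
      nonarch_euclid sigma /\
        (forall a b, sigma (a * b) = oadd (sigma a) (sigma b));
      nonarch_norm (fun a => pow2 R (sigma a));
      is_norm (fun a => pow2 R (sigma a)) /\
        (forall z : int, ole (sigma (z%:~R)) (sigma 1));
      is_norm (fun a => pow2 R (sigma a)) /\ contains_field A;
      (forall F : pred A, factroid F <->
         (F =i predT \/ exists c : A, F =i [pred x | ole (sigma x) (sigma c)])) /\
      (forall m n, (exists a, sigma a = m) -> (exists b, sigma b = n) ->
         forall x y, sigma x = m -> sigma y = n -> sigma (x * y) = oadd m n)
    ].
Proof.
move=> He.
have ab := @a_b R A sigma He.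
have ba := @b_a R A sigma.
split; first exact: ab.
split.
  move=> h; have ha := ba h; split; first by case: h.
  exact: (a_c He ha).
split.
  case=> hn hz; have ha := c_a He hn hz; split => //.
  exact: (a_d He ha).
split.
  case=> hn hK; have ha := c_a He hn (d_c He hn hK).
  exact: (a_e He ha).
by move=> h; apply: e_a.
Qed.

Section KF.
Variables (A : idomainType) (S : {pred A}).
Hypothesis HS : GRing.divring_closed S.
Hypothesis Hf : forall x, x \in S -> x != 0 -> x \is a GRing.unit.

Inductive kT := mkK x & x \in S.
Definition vK u := let: mkK x _ := u in x.
HB.instance Definition _ := [isSub for vK].
HB.instance Definition _ := [Choice of kT by <:].
HB.instance Definition _ := GRing.SubChoice_isSubIntegralDomain.Build A S kT HS.

Lemma kT_field : GRing.field_axiom kT.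
Proof.
move=> x nx0. have : vK x != 0 by apply: contra nx0 => /eqP h; apply/eqP/val_inj.
move=> h; exact: (Hf (valP x) h).
Qed.
HB.instance Definition _ := GRing.ComUnitRing_isField.Build kT kT_field.
Definition kTF : fieldType := kT.
End KF.

Section Struct.
Variables (A : idomainType) (s : A -> option nat).
Hypothesis He : euclidean s.
Hypothesis Hna : nonarch_euclid s.
Hypothesis Hm : forall a b, s (a * b) = oadd (s a) (s b).
Variables (t : A) (d : nat).
Hypothesis Ht : s t = Some d.
Hypothesis Hd : (0 < d)%N.
Hypothesis Hmin : forall a m, s a = Some m -> (0 < m)%N -> (d <= m)%N.

Definition Sp : {pred A} := fun x => ole (s x) (Some 0).

Lemma Sp_closed : GRing.divring_closed Sp.
Proof.
split; first by rewrite /Sp unfold_in /= (s1 He Hm).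
  move=> x y; rewrite /Sp !unfold_in /= => hx hy; apply: ole_trans (sB He Hna _ _) _.
  by case: (omax_cases (s x) (s y)) => ->.
move=> x y; rewrite /Sp !unfold_in /= => hx hy.
have hy' : ole (s y^-1) (Some 0).
  case: (boolP (y \is a GRing.unit)) => u; first by rewrite (s_unit He Hm (a := y^-1)) // unitrV.
  by rewrite invr_out.
rewrite Hm; move: hx hy'; case: (s x) => // n; case: (s y^-1) => //= m; lia.
Qed.

Lemma Sp_unit x : x \in Sp -> x != 0 -> x \is a GRing.unit.
Proof.
rewrite /Sp unfold_in /= => hx x0; case: (s_le0 He Hm hx) => // h.
by rewrite h eqxx in x0.
Qed.

Definition kk := kTF Sp_closed Sp_unit.

Lemma cfu : commr_rmorph (val : kk -> A) t.
Proof. by move=> a; rewrite /GRing.comm mulrC. Qed.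

Definition phi : {rmorphism {poly kk} -> A} := horner_morph cfu.
Lemma phiX : phi 'X = t.
Proof. exact: horner_morphX. Qed.
Lemma phiC c : phi c%:P = val c.
Proof. exact: horner_morphC. Qed.

Lemma phi_MXC p c : phi (p * 'X + c%:P) = phi p * t + val c.
Proof. by rewrite rmorphD rmorphM phiX phiC. Qed.

Lemma val_S (c : kk) : ole (s (val c)) (Some 0).
Proof. by have := valP c; rewrite /Sp unfold_in. Qed.

Lemma phi_deg p : p != 0 -> s (phi p) = Some (d * (size p).-1)%N.
Proof.
elim/poly_ind: p => [|p c IH]; first by rewrite eqxx.
move=> hp; rewrite phi_MXC size_MXaddC.
have [p0|p0] := eqVneq p 0.
  subst p; rewrite mul0r add0r polyC_eq0 in hp.
  rewrite rmorph0 mul0r add0r /= ?eqxx (negbTE hp) /= ?muln0.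
  have vc0 : val c != 0 by apply: contra hp => /eqP h; apply/eqP/val_inj; rewrite h.
  have [n hn] := sSome He vc0; have := val_S c; rewrite hn /= leqn0 => /eqP hn0.
  by rewrite hn0 size_poly0 muln0.
rewrite /= (s_strict He Hna); last first.
  rewrite Hm (IH p0) Ht /olt /=; have := val_S c; case: (s (val c)) => //= k hk.
  by rewrite -ltnNge; lia.
rewrite Hm (IH p0) Ht /=; congr Some.
have : (0 < size p)%N by rewrite size_poly_gt0.
case: (size p) => //= k _; lia.
Qed.

Lemma phi_inj : injective phi.
Proof.
move=> p q e; apply/eqP; rewrite -subr_eq0; apply/negPn/negP => h.
have := phi_deg h; by rewrite rmorphB /= e subrr (s0 He).
Qed.

Lemma phi_surj n a : ole (s a) (Some n) -> exists p, phi p = a.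
Proof.
have base b : ole (s b) (Some 0) -> exists p, phi p = b.
  move=> hb; have hb' : b \in Sp by rewrite /Sp unfold_in.
  by exists ((@mkK A Sp b hb' : kk)%:P); rewrite phiC.
elim: n a => [|n IH] a ha; first exact: base.
case Ea: (s a) => [m|]; last by apply: base; rewrite Ea.
case: m Ea => [|m] Ea; first by apply: base; rewrite Ea.
have [q [r [e hr]]] := tdiv He Ht Hd Hmin a.
have [hq hdm] := tdiv_val He Hna Hm Ht Hd Ea (ltn0Sn _) e hr.
have : ole (s q) (Some n) by rewrite hq /=; move: ha; rewrite Ea /=; lia.
move/IH => [p hp].
have hr' : r \in Sp by rewrite /Sp unfold_in.
exists (p * 'X + (@mkK A Sp r hr' : kk)%:P); rewrite phi_MXC hp e mulrC //.
Qed.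

Lemma phi_bij : bijective phi.
Proof.
have hs : forall a, exists p, phi p == a.
  move=> a; have [n hn] : exists n, ole (s a) (Some n).
    by case: (s a) => [n|]; [exists n; rewrite /= leqnn | exists 0%N].
  by have [p hp] := phi_surj hn; exists p; apply/eqP.
exists (fun a => xchoose (hs a)).
  by move=> p; apply: phi_inj; apply/eqP; apply: (xchooseP (hs (phi p))).
by move=> a; apply/eqP; apply: (xchooseP (hs a)).
Qed.
End Struct.

Lemma struct_thm (A : idomainType) (s : A -> option nat) : euclidean s -> Pa s ->
  is_field A \/ exists k : fieldType, exists f : {rmorphism {poly k} -> A}, bijective f.
Proof.
move=> He [Hna Hm].
case: (classic (exists t d, s t = Some d /\ (0 < d)%N)) => [hex|hno].
  have [d [[t [Ht Hd]] Hmin]] := min_ex (P := fun d => exists t, s t = Some d /\ (0 < d)%N)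
     ltac:(by case: hex => t [d hd]; exists d, t).
  have Hmin' : forall a m, s a = Some m -> (0 < m)%N -> (d <= m)%N.
    by move=> b m hb hm; apply: Hmin; exists b.
  right; do 2 eexists; exact: (phi_bij He Hna Hm Ht Hd Hmin').
left => x x0.
have h : forall t d, s t = Some d -> (0 < d)%N -> False by move=> t d h1 h2; apply: hno; exists t, d.
case: (s_le0 He Hm (small_none x h)) => // h0; by rewrite h0 eqxx in x0.
Qed.


Lemma field_sigma (A : idomainType) : is_field A ->
  exists s : A -> option nat, euclidean s /\ nonarch_euclid s /\
    (forall a b, s (a * b) = oadd (s a) (s b)).
Proof.
move=> hF; exists (fun a => if a == 0 then None else Some 0%N).
split; last split.
- split; first by move=> a; case: eqP.
  split.
    move=> a b b0; exists (b^-1 * a), 0; rewrite addr0 mulVKr ?hF //; split => //.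
    by rewrite eqxx (negbTE b0).
  move=> a b b0; case: eqP => //= /eqP a0.
  by rewrite mulf_eq0 (negbTE a0) (negbTE b0).
- move=> a b; case: (eqVneq (a + b) 0) => //= ab0.
  case: (eqVneq a 0) => [a0|a0]; case: (eqVneq b 0) => [b0|b0] //=.
  by rewrite a0 b0 addr0 eqxx in ab0.
- move=> a b; rewrite mulf_eq0.
  by case: (eqVneq a 0); case: (eqVneq b 0).
Qed.

Lemma poly_sigma (A : idomainType) (k : fieldType) (f : {rmorphism {poly k} -> A}) :
  bijective f ->
  exists s : A -> option nat, euclidean s /\ nonarch_euclid s /\
    (forall a b, s (a * b) = oadd (s a) (s b)).
Proof.
case=> g fg gf.
have gD a b : g (a + b) = g a + g b.
  by apply: (can_inj fg); rewrite rmorphD !gf.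
have gM a b : g (a * b) = g a * g b.
  by apply: (can_inj fg); rewrite rmorphM !gf.
have g0 a : (g a == 0) = (a == 0).
  apply/eqP/eqP => [h|->]; first by rewrite -(gf a) h rmorph0.
  by rewrite -(rmorph0 f) fg.
exists (fun a => if a == 0 then None else Some (size (g a)).-1).
have sz a : a != 0 -> (0 < size (g a))%N by move=> a0; rewrite size_poly_gt0 g0.
split; last split.
- split; first by move=> a; case: eqP.
  split.
    move=> a b b0; exists (f (g a %/ g b)), (f (g a %% g b)); split.
      by rewrite -[a in LHS]gf {1}(divp_eq (g a) (g b)) rmorphD rmorphM gf mulrC.
    rewrite (negbTE b0) fg; case: eqP => //= /eqP r0.
    have := @ltn_modpN0 _ (g a) (g b); rewrite g0 => /(_ b0).
    have : (0 < size (g a %% g b)%R)%N by rewrite size_poly_gt0; apply: contra r0 => /eqP ->; rewrite rmorph0.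
    rewrite /olt /= -ltnNge; move: (size (g a %% g b)%R) (size (g b)) => x y; lia.
  move=> a b b0; case: eqP => //= /eqP a0.
  rewrite mulf_eq0 (negbTE a0) (negbTE b0) /= gM size_mul ?g0 //.
  have := sz _ a0; have := sz _ b0; move: (size (g a)) (size (g b)) => x y; lia.
- move=> a b; case: (eqVneq (a + b) 0) => //= ab0.
  case: (eqVneq a 0) => [a0|a0].
    by move: ab0; rewrite a0 add0r => ab0; rewrite (negbTE ab0) /= leqnn.
  case: (eqVneq b 0) => [b0|b0].
    by rewrite b0 addr0 /= leqnn.
  rewrite /= gD /omax /=; have hD := size_polyD (g a) (g b).
  move: hD; move: (size (g a)) (size (g b)) (size (g a + g b)) => x y z.
  by case: ifP => /= h; rewrite /maxn; case: ltnP => /= h1 h2; lia.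
- move=> a b; rewrite mulf_eq0.
  case: (eqVneq a 0) => [a0|a0]; case: (eqVneq b 0) => [b0|b0] //=.
  rewrite gM size_mul ?g0 //; congr Some; have := sz _ a0; have := sz _ b0; move: (size (g a)) (size (g b)) => x y; lia.
Qed.

Theorem proposition8p4 (R : realFieldType) (A : idomainType) :
  (forall sigma : A -> option nat, euclidean sigma ->
    [<->
      (* (a) *)
      nonarch_euclid sigma /\
        (forall a b, sigma (a * b) = oadd (sigma a) (sigma b));
      (* (b) *)
      nonarch_norm (fun a => pow2 R (sigma a));
      (* (c) *)
      is_norm (fun a => pow2 R (sigma a)) /\
        (forall z : int, ole (sigma (z%:~R)) (sigma 1));
      (* (d) *)
      is_norm (fun a => pow2 R (sigma a)) /\ contains_field A;
      (* (e) *)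
      (forall F : pred A, factroid F <->
         (F =i predT \/ exists c : A, F =i [pred x | ole (sigma x) (sigma c)])) /\
      (forall m n, (exists a, sigma a = m) -> (exists b, sigma b = n) ->
         forall x y, sigma x = m -> sigma y = n -> sigma (x * y) = oadd m n)
    ]) /\
  ((exists sigma : A -> option nat, euclidean sigma /\
      nonarch_euclid sigma /\
        (forall a b, sigma (a * b) = oadd (sigma a) (sigma b))) <->
   (is_field A \/
    exists k : fieldType, exists f : {rmorphism {poly k} -> A}, bijective f)).
Proof.
split; first by move=> sigma He; exact: tfae_part.
split.
  by case=> s [He [Hna Hm]]; exact: (struct_thm He (conj Hna Hm)).
case=> [hF|[k [f hf]]]; [exact: field_sigma | exact: (poly_sigma hf)].
Qed.
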